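(* There is an absolute constant $C>0$ such that, for diffusive deposition and every configuration $\sigma\in\mathbb N^N$ with $|\sigma|<N/2$, $$P_g(\sigma)\ge\exp\Big(-\frac1N\Big(\sum_{j=1}^N\sigma_j(\sigma_j+1)\Big)\Big(1+C\frac{|\sigma|}{N}\Big)\Big).$$
   Context: Diffusive deposition: for $N\ge2$, $G_N=\{1,\dots,N\}$, a configuration $\sigma\in\mathbb N^N$ gives column heights, $|\sigma|=\sum_i\sigma_i$. Given $\sigma$, an explorer is a walk $(X_n,Z_n)_{n\ge0}$ with $(X_n)$ i.i.d. uniform on $G_N$, $Z_0=\max_i\sigma_i+1$, and $(Z_{n+1}-Z_n)$ i.i.d. uniform on $\{-1,1\}$ independent of $(X_n)$. With $n^*=\inf\{n:Z_n\le\sigma_{X_n}\}$, the hitting site is $(X_{n^*},Z_{n^*})$ and the explorer attaches to column $X_{n^*}$. The explorer hits the ground if $Z_{n^*}=0$; $P_g(\sigma)$ denotes the probability of this event. *)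

(* Defs.v *)
From Stdlib Require Import Reals ZArith Lra Lia.
Open Scope R_scope.

Fixpoint rsum (n : nat) (f : nat -> R) : R :=
  match n with O => 0 | S k => rsum k f + f k end.
Fixpoint nsum (n : nat) (f : nat -> nat) : nat :=
  match n with O => 0%nat | S k => (nsum k f + f k)%nat end.
Fixpoint nmax (n : nat) (f : nat -> nat) : nat :=
  match n with O => 0%nat | S k => Nat.max (nmax k f) (f k) end.

(* A configuration sigma in N^N is a function nat -> nat, of which only the
   values at the sites 0..N-1 matter (site i stands for site i+1 of G_N). *)

Definition size_conf (N : nat) (sigma : nat -> nat) : nat := nsum N sigma.

Definition max_height (N : nat) (sigma : nat -> nat) : nat := nmax N sigma.

(* pg_within N sigma T z : for an explorer whose height at the current time n
   is Z_n = z (and whose positions X_n, X_{n+1}, ... are i.i.d. uniform on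
   G_N, with i.i.d. uniform +-1 height increments), the probability that it
   stops (Z_m <= sigma_{X_m}) at some time m in {n, ..., n+T}, not earlier
   than m, and that Z_m = 0 (it hits the ground).  This is the law of the
   explorer written by conditioning on X_n and on the increment Z_{n+1}-Z_n. *)
Fixpoint pg_within (N : nat) (sigma : nat -> nat) (T : nat) (z : Z) : R :=
  match T with
  | O => / INR N * rsum N (fun x =>
           if Z.leb z (Z.of_nat (sigma x))
           then (if Z.eqb z 0 then 1 else 0) else 0)
  | S T' => / INR N * rsum N (fun x =>
           if Z.leb z (Z.of_nat (sigma x))
           then (if Z.eqb z 0 then 1 else 0)
           else / 2 * (pg_within N sigma T' (z + 1)%Z
                       + pg_within N sigma T' (z - 1)%Z))
  end.

(* P(n* <= T and Z_{n*} = 0) for the explorer started at Z_0 = max sigma + 1. *)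
Definition Pg_upto (N : nat) (sigma : nat -> nat) (T : nat) : R :=
  pg_within N sigma T (Z.of_nat (max_height N sigma) + 1)%Z.

(* P_g(sigma) is the limit as T -> infinity of Pg_upto (monotone, bounded);
   the theorem asserts existence of this limit together with the bound. *)

(* Main.v *)
Require Import Defs.
From Stdlib Require Import Reals ZArith Lra Lia.
Open Scope R_scope.

Lemma rsum_ext n f g : (forall x, (x < n)%nat -> f x = g x) -> rsum n f = rsum n g.
Proof. induction n; simpl; intros; auto. rewrite IHn, H; auto. Qed.

Lemma rsum_le n f g : (forall x, (x < n)%nat -> f x <= g x) -> rsum n f <= rsum n g.
Proof. induction n; simpl; intros. lra. pose proof (H n ltac:(lia)). pose proof (IHn ltac:(intros; apply H; lia)). lra. Qed.

Lemma rsum_plus n f g : rsum n (fun x => f x + g x) = rsum n f + rsum n g.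
Proof. induction n; simpl; lra. Qed.

Lemma rsum_scal n c f : rsum n (fun x => c * f x) = c * rsum n f.
Proof. induction n; simpl. ring. rewrite IHn; ring. Qed.

Lemma rsum_const n c : rsum n (fun _ => c) = INR n * c.
Proof. induction n; cbn [rsum]. simpl; ring. rewrite IHn, S_INR. ring. Qed.

Lemma rsum_INR n f : INR (nsum n f) = rsum n (fun x => INR (f x)).
Proof. induction n; simpl; auto. rewrite plus_INR, IHn. auto. Qed.

Lemma rsum_if0 n (b : nat -> bool) K :
  rsum n (fun x => if b x then 0 else K) = (INR n - rsum n (fun x => if b x then 1 else 0)) * K.
Proof. induction n; cbn [rsum]. simpl; ring. rewrite IHn, S_INR. destruct (b n); ring. Qed.

Lemma nmax_ge n f x : (x < n)%nat -> (f x <= nmax n f)%nat.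
Proof. induction n; simpl; intros. lia. destruct (Nat.eq_dec x n). subst; lia.
  specialize (IHn ltac:(lia)). lia. Qed.

Lemma rsum_nonneg n f : (forall x, (x < n)%nat -> 0 <= f x) -> 0 <= rsum n f.
Proof. induction n; simpl; intros. lra. pose proof (H n ltac:(lia)). pose proof (IHn ltac:(intros; apply H; lia)). lra. Qed.


Section S.
Variable N : nat.
Variable sigma : nat -> nat.
Hypothesis HN : (1 <= N)%nat.

Let pg := pg_within N sigma.

Lemma INRN_pos : 0 < INR N.
Proof. apply lt_0_INR; lia. Qed.

Lemma avg_bound (f : nat -> R) : (forall x, (x < N)%nat -> 0 <= f x <= 1) ->
  0 <= / INR N * rsum N f <= 1.
Proof. intros H. pose proof INRN_pos.
  assert (0 <= rsum N f) by (rewrite <- (Rmult_0_r (INR N)), <- rsum_const; apply rsum_le; intros; apply H; auto).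
  assert (rsum N f <= INR N * 1) by (rewrite <- rsum_const; apply rsum_le; intros; apply H; auto).
  split. apply Rmult_le_pos; auto. left; apply Rinv_0_lt_compat; auto.
  apply (Rmult_le_reg_l (INR N)); auto. rewrite <- Rmult_assoc, Rinv_r; lra. Qed.

Lemma pg_bounds T z : 0 <= pg T z <= 1.
Proof. revert z; induction T; intros z; unfold pg; simpl; apply avg_bound; intros x _.
  destruct (Z.leb z (Z.of_nat (sigma x))), (Z.eqb z 0); lra.
  destruct (Z.leb z (Z.of_nat (sigma x))). destruct (Z.eqb z 0); lra.
  pose proof (IHT (z+1)%Z); pose proof (IHT (z-1)%Z). unfold pg in *. lra. Qed.

Lemma pg_mono T z : pg T z <= pg (S T) z.
Proof. revert z; induction T; intros z; unfold pg; simpl; apply Rmult_le_compat_l;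
  try (left; apply Rinv_0_lt_compat; apply INRN_pos); apply rsum_le; intros x _.
  destruct (Z.leb z (Z.of_nat (sigma x))). lra.
  pose proof (pg_bounds 0 (z+1)%Z); pose proof (pg_bounds 0 (z-1)%Z). unfold pg in *; simpl in *. lra.
  destruct (Z.leb z (Z.of_nat (sigma x))). lra.
  pose proof (IHT (z+1)%Z); pose proof (IHT (z-1)%Z). unfold pg in *; simpl in *. lra. Qed.

Lemma pg_zero T : pg T 0%Z = 1.
Proof. pose proof INRN_pos. destruct T; unfold pg; simpl;
  (rewrite (rsum_ext _ _ (fun _ => 1)); [rewrite rsum_const; field; lra|]);
  intros x _; destruct (sigma x); reflexivity. Qed.

Definition cnt (k : nat) := rsum N (fun x => if Nat.leb k (sigma x) then 1 else 0).
Definition w (k : nat) := / INR N * (INR N - cnt k).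

Lemma zleb k a : Z.leb (Z.of_nat k) (Z.of_nat a) = Nat.leb k a.
Proof. destruct (Nat.leb_spec k a), (Z.leb_spec (Z.of_nat k) (Z.of_nat a)); auto; lia. Qed.

Lemma pg_step T k : (1 <= k)%nat ->
  pg (S T) (Z.of_nat k) = w k * (/2 * (pg T (Z.of_nat (S k)) + pg T (Z.of_nat (k-1)))).
Proof. intros Hk. unfold pg at 1; simpl pg_within.
  replace (Z.of_nat k + 1)%Z with (Z.of_nat (S k)) by lia.
  replace (Z.of_nat k - 1)%Z with (Z.of_nat (k-1)) by lia.
  rewrite (rsum_ext _ _ (fun x => if Nat.leb k (sigma x) then 0 else
     / 2 * (pg T (Z.of_nat (S k)) + pg T (Z.of_nat (k - 1))))).
  rewrite rsum_if0. unfold w, cnt, pg. ring.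
  intros x _. rewrite zleb. destruct (Nat.leb k (sigma x)); auto.
  destruct (Z.eqb_spec (Z.of_nat k) 0); [lia|auto]. Qed.

Lemma pg_init k : (1 <= k)%nat -> pg 0 (Z.of_nat k) = 0.
Proof. intros Hk. unfold pg; simpl. rewrite (rsum_ext _ _ (fun _ => 0)).
  rewrite rsum_const; ring. intros x _. destruct (Z.leb (Z.of_nat k) (Z.of_nat (sigma x))); auto.
  destruct (Z.eqb_spec (Z.of_nat k) 0); [lia|auto]. Qed.

End S.


Lemma step_ineq p0 p1 p2 q m Bk1 Bk : 0 <= q <= m -> m < /2 -> 0 <= p1 -> 0 <= Bk1 ->
  0 <= p1 - p2 <= p2 * Bk1 -> 2 * p1 = (1 - q) * (p2 + p0) -> Bk = Bk1 + 2 * (1 + 2*m) * q ->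
  0 <= p0 - p1 <= p1 * Bk.
Proof. intros Hq Hm Hp1 HB [He1 He2] Hr HBk. subst Bk.
  assert (E : (1 - q) * ((p0 - p1) - (p1 - p2)) = 2 * p1 * q) by nra.
  assert (H1 : 0 <= (p0 - p1) - (p1 - p2)).
  { apply (Rmult_le_reg_l (1 - q)). lra. rewrite E. nra. }
  assert (H2 : (p0 - p1) - (p1 - p2) <= 2 * p1 * (1 + 2*m) * q).
  { apply (Rmult_le_reg_l (1 - q)). lra. rewrite E.
    assert (0 <= (1-q)*(1+2*m) - 1) by nra.
    assert (0 <= p1 * q) by nra. nra. }
  assert (p2 * Bk1 <= p1 * Bk1) by nra. nra. Qed.

Lemma exp_ge1 B : 0 <= B -> 1 + B <= exp B.
Proof. intros _; apply exp_ineq1_le. Qed.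

Lemma chain_ineq p0 p1 B : 0 <= p1 -> 0 <= B -> p0 - p1 <= p1 * B -> p0 <= p1 * exp B.
Proof. intros. pose proof (exp_ge1 B H0). nra. Qed.


Lemma cv_const c : Un_cv (fun _ => c) c.
Proof. intros e He. exists 0%nat. intros. rewrite R_dist_eq. auto. Qed.

Lemma cv_shift u l : Un_cv u l -> Un_cv (fun n => u (S n)) l.
Proof. intros H e He. destruct (H e He) as [M HM]. exists M. intros. apply HM. lia. Qed.

Lemma lam a k : ((a+1-k)*(a+2-k) = (a+1-S k)*(a+2-S k) + 2*(a+1-k))%nat.
Proof. destruct (Nat.le_gt_cases k a).
  replace (a+1-k)%nat with (S (a-k)) by lia. replace (a+2-k)%nat with (S (S (a-k))) by lia.
  replace (a+1-S k)%nat with (a-k)%nat by lia. replace (a+2-S k)%nat with (S (a-k)) by lia. ring.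
  replace (a+1-S k)%nat with 0%nat by lia. replace (a+1-k)%nat with 0%nat by lia. lia. Qed.
Section S.
Variable N : nat.
Variable sigma : nat -> nat.
Hypothesis HN : (1 <= N)%nat.

Let pg := pg_within N sigma.

Lemma pg_cv z : {l | Un_cv (fun T => pg T z) l}.
Proof. apply growing_cv. intro n. apply pg_mono; auto.
  exists 1. intros x [n ->]. apply pg_bounds; auto. Qed.

Definition p k := proj1_sig (pg_cv (Z.of_nat k)).
Lemma p_cv k : Un_cv (fun T => pg T (Z.of_nat k)) (p k).
Proof. unfold p. destruct (pg_cv (Z.of_nat k)); auto. Qed.

Lemma p_bounds k : 0 <= p k <= 1.
Proof. split. apply (Rle_cv_lim (Un := fun _ => 0) (Vn := fun T => pg T (Z.of_nat k))).
  intros; apply pg_bounds; auto. apply cv_const. apply p_cv.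
  apply (Rle_cv_lim (Vn := fun _ => 1) (Un := fun T => pg T (Z.of_nat k))).
  intros; apply pg_bounds; auto. apply p_cv. apply cv_const. Qed.

Lemma p_zero : p 0 = 1.
Proof. apply (UL_sequence (fun T => pg T (Z.of_nat 0))). apply p_cv.
  eapply Un_cv_ext; [|apply cv_const]. intros; simpl; symmetry; apply pg_zero; auto. Qed.

Lemma p_rec k : (1 <= k)%nat -> p k = w N sigma k * (/2 * (p (S k) + p (k-1))).
Proof. intros Hk. apply (UL_sequence (fun T => pg (S T) (Z.of_nat k))).
  apply (cv_shift (fun T => pg T (Z.of_nat k))), p_cv.
  eapply Un_cv_ext. intros; symmetry; apply pg_step; auto.
  apply CV_mult. apply cv_const. apply CV_mult. apply cv_const. apply CV_plus; apply p_cv. Qed.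

Definition hh := S (nmax N sigma).

Lemma cnt_high k : (hh <= k)%nat -> cnt N sigma k = 0.
Proof. intros Hk. unfold cnt. rewrite (rsum_ext _ _ (fun _ => 0)). rewrite rsum_const; ring.
  intros x Hx. pose proof (nmax_ge N sigma x Hx). unfold hh in Hk.
  destruct (Nat.leb_spec k (sigma x)); auto; lia. Qed.

Lemma w_high k : (hh <= k)%nat -> w N sigma k = 1.
Proof. intros. unfold w. rewrite cnt_high; auto. pose proof (INRN_pos N HN). field. lra. Qed.

Lemma p_flat : p hh = p (hh - 1).
Proof.
  set (d := p hh - p (hh-1)).
  assert (Hd : forall j, p (hh + j) - p (hh + j - 1) = d).
  { induction j. rewrite Nat.add_0_r; auto.
    pose proof (p_rec (hh + j) ltac:(unfold hh; lia)). rewrite w_high in H by lia.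
    replace (hh + S j - 1)%nat with (hh + j)%nat by lia.
    replace (S (hh + j)) with (hh + S j)%nat in H by lia. lra. }
  assert (Hl : forall j, p (hh + j) = p (hh - 1) + INR (S j) * d).
  { induction j. rewrite Nat.add_0_r; change (INR 1) with 1; unfold d; ring.
    pose proof (Hd (S j)). replace (hh + S j - 1)%nat with (hh + j)%nat in H by lia.
    rewrite S_INR. lra. }
  assert (Hb : forall j, Rabs (INR (S j) * d) <= 1).
  { intros j. pose proof (Hl j). pose proof (p_bounds (hh+j)). pose proof (p_bounds (hh-1)).
    apply Rabs_le. lra. }
  destruct (Req_dec d 0) as [H0|H0]. unfold d in H0; lra.
  exfalso. destruct (INR_unbounded (/ Rabs d)) as [n Hn].
  pose proof (Hb n). rewrite Rabs_mult, Rabs_right in H by (apply Rle_ge, pos_INR).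
  rewrite S_INR in H. pose proof (Rabs_pos_lt d H0).
  assert (INR n * Rabs d > 1).
  { apply (Rmult_lt_reg_r (/ Rabs d)). apply Rinv_0_lt_compat; auto.
    rewrite Rmult_assoc, Rinv_r by lra. lra. }
  nra. Qed.
Hypothesis Hsz : INR (size_conf N sigma) < INR N / 2.

Definition mm := INR (size_conf N sigma) / INR N.
Definition qq k := cnt N sigma k / INR N.
Definition Bt k := (1 + 2*mm) / INR N * rsum N (fun x => INR (2 * (sigma x + 1 - k))).
Definition Lt k := (1 + 2*mm) / INR N * rsum N (fun x => INR ((sigma x + 1 - k) * (sigma x + 2 - k))).

Lemma mm_bounds : 0 <= mm < /2.
Proof. pose proof (INRN_pos N HN). unfold mm. split.
  apply Rmult_le_pos. apply pos_INR. left; apply Rinv_0_lt_compat; auto.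
  apply (Rmult_lt_reg_l (INR N)); auto. unfold Rdiv. rewrite <- Rmult_assoc, (Rmult_comm (INR N)), Rmult_assoc, Rinv_r by lra. lra. Qed.

Lemma qq_bounds k : (1 <= k)%nat -> 0 <= qq k <= mm.
Proof. intros Hk. pose proof (INRN_pos N HN). unfold qq, mm, Rdiv.
  assert (0 <= cnt N sigma k).
  { unfold cnt. apply rsum_nonneg. intros x _.
    destruct (Nat.leb k (sigma x)); lra. }
  assert (cnt N sigma k <= INR (size_conf N sigma)).
  { unfold cnt, size_conf. rewrite rsum_INR. apply rsum_le. intros x _.
    destruct (Nat.leb_spec k (sigma x)). apply (le_INR 1); lia. apply pos_INR. }
  pose proof (Rinv_0_lt_compat _ H). split; nra. Qed.

Lemma w_qq k : w N sigma k = 1 - qq k.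
Proof. pose proof (INRN_pos N HN). unfold w, qq. field. lra. Qed.

Lemma Bt_pos k : 0 <= Bt k.
Proof. pose proof (INRN_pos N HN). pose proof mm_bounds. unfold Bt. apply Rmult_le_pos.
  unfold Rdiv. apply Rmult_le_pos. lra. left; apply Rinv_0_lt_compat; auto.
  apply rsum_nonneg. intros; apply pos_INR. Qed.

Lemma Bt_step k : Bt k = Bt (S k) + 2 * (1 + 2*mm) * qq k.
Proof. unfold Bt, qq, cnt.
  rewrite (rsum_ext _ _ (fun x => INR (2 * (sigma x + 1 - S k)) + 2 * (if Nat.leb k (sigma x) then 1 else 0))).
  rewrite rsum_plus, rsum_scal. pose proof (INRN_pos N HN). field. lra.
  intros x _. destruct (Nat.leb_spec k (sigma x)).
  replace (2 * 1) with (INR 2) by (simpl; ring). rewrite <- plus_INR. f_equal. lia.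
  rewrite Rmult_0_r, Rplus_0_r. f_equal. lia. Qed.

Lemma Lt_step k : Lt k = Lt (S k) + Bt k.
Proof. unfold Lt, Bt. rewrite <- Rmult_plus_distr_l, <- rsum_plus. f_equal. apply rsum_ext.
  intros x _. rewrite <- plus_INR. f_equal. apply lam. Qed.

Lemma Bt_hh : Bt hh = 0.
Proof. unfold Bt. rewrite (rsum_ext _ _ (fun _ => 0)). rewrite rsum_const; ring.
  intros x Hx. pose proof (nmax_ge N sigma x Hx). unfold hh. replace (2 * _)%nat with 0%nat by lia. auto. Qed.

Lemma Lt_top : Lt (S hh) = 0.
Proof. unfold Lt. rewrite (rsum_ext _ _ (fun _ => 0)). rewrite rsum_const; ring.
  intros x Hx. pose proof (nmax_ge N sigma x Hx). unfold hh. replace (sigma x + 1 - _)%nat with 0%nat by lia. auto. Qed.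

Lemma Lt_one : Lt 1 = / INR N * INR (nsum N (fun j => sigma j * (sigma j + 1))%nat) * (1 + 2 * INR (size_conf N sigma) / INR N).
Proof. unfold Lt, mm. rewrite (rsum_ext N (fun x => INR ((sigma x + 1 - 1) * (sigma x + 2 - 1))) (fun x => INR (sigma x * (sigma x + 1)))).
  rewrite <- (rsum_INR N (fun x => (sigma x * (sigma x + 1))%nat)).
  pose proof (INRN_pos N HN). field. lra.
  intros x _. f_equal. replace (sigma x + 1 - 1)%nat with (sigma x) by lia.
  replace (sigma x + 2 - 1)%nat with (sigma x + 1)%nat by lia. auto. Qed.

Lemma invariant j : (j <= hh - 1)%nat -> 0 <= p (hh - j - 1) - p (hh - j) <= p (hh - j) * Bt (hh - j).
Proof. induction j; intros Hj.
  rewrite Nat.sub_0_r, Bt_hh, p_flat. rewrite Rmult_0_r. lra.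
  specialize (IHj ltac:(lia)). set (k := (hh - S j)%nat).
  replace (hh - j)%nat with (S k) in IHj by (unfold k; lia).
  replace (hh - j - 1)%nat with k in IHj by (unfold k; lia).
  replace (hh - S j - 1)%nat with (k - 1)%nat by (unfold k; lia). fold k.
  assert (Hk : (1 <= k)%nat) by (unfold k; lia).
  pose proof (p_rec k Hk). rewrite w_qq in H.
  apply (step_ineq _ _ (p (S k)) (qq k) mm (Bt (S k))).
  apply qq_bounds; auto. apply mm_bounds. apply p_bounds. apply Bt_pos. replace (S k - 1)%nat with k in IHj by lia. auto. rewrite H; field. apply Bt_step. Qed.

Lemma chain k : (k <= hh)%nat -> p 0 <= p k * exp (Lt 1 - Lt (S k)).
Proof. induction k; intros Hk. rewrite Rminus_diag, exp_0. lra.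
  specialize (IHk ltac:(lia)).
  pose proof (invariant (hh - S k) ltac:(lia)).
  replace (hh - (hh - S k))%nat with (S k) in H by lia.
  replace (S k - 1)%nat with k in H by lia.
  pose proof (chain_ineq (p k) (p (S k)) (Bt (S k)) ltac:(apply p_bounds) (Bt_pos _) ltac:(lra)).
  replace (Lt 1 - Lt (S (S k))) with ((Lt 1 - Lt (S k)) + Bt (S k)) by (rewrite (Lt_step (S k)); ring).
  rewrite exp_plus. pose proof (exp_pos (Lt 1 - Lt (S k))). nra. Qed.

Lemma final : exp (- Lt 1) <= p hh.
Proof. pose proof (chain hh (le_n _)). rewrite p_zero, Lt_top, Rminus_0_r in H.
  apply (Rmult_le_reg_r (exp (Lt 1))). apply exp_pos.
  rewrite <- exp_plus, Rplus_opp_l, exp_0. lra. Qed.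

End S.

Theorem lemma2p1 :
  exists C : R, 0 < C /\
    forall (N : nat) (sigma : nat -> nat),
      (2 <= N)%nat ->
      INR (size_conf N sigma) < INR N / 2 ->
      exists Pg : R,
        Un_cv (Pg_upto N sigma) Pg /\
        exp (- (/ INR N) *
               INR (nsum N (fun j => sigma j * (sigma j + 1))%nat) *
               (1 + C * INR (size_conf N sigma) / INR N))
          <= Pg.
Proof.
  exists 2. split. lra. intros N sigma HN2 Hsz.
  assert (HN : (1 <= N)%nat) by lia.
  exists (p N sigma HN (hh N sigma)). split.
  - eapply Un_cv_ext; [|apply p_cv]. intros T. unfold Pg_upto, hh, max_height.
    f_equal. lia.
  - pose proof (final N sigma HN Hsz). rewrite Lt_one in H by exact HN.
    replace (- / INR N * INR (nsum N (fun j => (sigma j * (sigma j + 1))%nat)) *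
      (1 + 2 * INR (size_conf N sigma) / INR N)) with
      (- (/ INR N * INR (nsum N (fun j => (sigma j * (sigma j + 1))%nat)) *
      (1 + 2 * INR (size_conf N sigma) / INR N))) by ring. exact H.
Qed.
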